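(* Let $\Phi_D$ be a set of BS indices containing $0$, $\Psi_D=\Phi_D\setminus\{0\}$ (sums assumed convergent), $K\ge1$, $\tau_c$, $\tau_p$ with $K\le\tau_p\le\tau_c$, and positive numbers $p_{l'i},q_{l'i},\beta_{0l'i}$ ($l'\in\Phi_D$, $i=1,\dots,K$), $\sigma^2$, $B_W$; fix $k$. For $M\ge1$ define the closed-form rates $$R^{rp}_{0k}(M)=B_W\Big(1-\frac{\tau_p}{\tau_c}\Big)\log_2\!\Big(1+\frac{Mp_{0k}\beta_{00k}}{\frac{M}{\tau_p}\sum_{l'\in\Psi_D}\sum_{i=1}^K\frac{p_{l'i}q_{l'i}}{q_{0k}}\frac{\beta_{0l'i}^2}{\beta_{00k}}+\frac{1}{\gamma^{rp}_{0k}}(\sum_{l'\in\Phi_D}\sum_{i=1}^Kp_{l'i}\beta_{0l'i}+\sigma^2)}\Big),$$ $\gamma^{rp}_{0k}=\frac{q_{0k}\tau_p\beta_{00k}}{q_{0k}\tau_p\beta_{00k}+\sum_{l'\in\Psi_D}\sum_iq_{l'i}\beta_{0l'i}+\sigma^2}$; $R^{sp}_{0k}(M)=B_W\log_2(1+Mp_{0k}\beta_{00k}/\mathcal I^{sp}(M))$ with $$\mathcal I^{sp}(M)=\frac{M}{\tau_c}\sum_{l'\in\Psi_D}\sum_{i=1}^K\frac{(p_{l'i}+(1-\frac1{\tau_c})q_{l'i})q_{l'i}}{q_{0k}}\frac{\beta_{0l'i}^2}{\beta_{00k}}+\frac{M}{\tau_c}\sum_{l'\in\Phi_D}\sum_{i=1}^K\frac{(p_{l'i}+q_{l'i})p_{l'i}}{q_{0k}}\frac{\beta_{0l'i}^2}{\beta_{00k}}+\frac{2}{\tau_c}p_{0k}\beta_{00k}+\frac{2}{\tau_c^2}\sum_{l'\in\Psi_D}\sum_{i=1}^K\frac{q_{l'i}p_{l'i}}{q_{0k}}\frac{\beta_{0l'i}^2}{\beta_{00k}}+\frac{1}{\tau_c^2}\sum_{l'\in\Phi_D}\sum_{i=1}^K\frac{p_{l'i}^2}{q_{0k}}\frac{\beta_{0l'i}^2}{\beta_{00k}}+\frac{1}{\gamma^{sp}_{0k}}\Big(\sum_{l'\in\Phi_D}\sum_{i=1}^K(q_{l'i}+p_{l'i})\beta_{0l'i}+\sigma^2\Big),$$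 and $R^{sp\text{-}ub}_{0k}(M)=B_W\log_2(1+Mp_{0k}\beta_{00k}/\mathcal I^{sp\text{-}ub}(M))$ with $$\mathcal I^{sp\text{-}ub}(M)=\frac{M}{\tau_c}\sum_{l'\in\Psi_D}\sum_{i=1}^K\frac{p_{l'i}q_{l'i}}{q_{0k}}\frac{\beta_{0l'i}^2}{\beta_{00k}}+\frac{M}{\tau_c}\sum_{l'\in\Phi_D}\sum_{i=1}^K\frac{p_{l'i}^2}{q_{0k}}\frac{\beta_{0l'i}^2}{\beta_{00k}}+\frac{1}{\tau_c^2}\sum_{l'\in\Phi_D}\sum_{i=1}^K\frac{p_{l'i}^2}{q_{0k}}\frac{\beta_{0l'i}^2}{\beta_{00k}}+\frac{1}{\gamma^{sp}_{0k}}\Big(\sum_{l'\in\Phi_D}\sum_{i=1}^Kp_{l'i}\beta_{0l'i}+\sigma^2\Big),$$ where $\gamma^{sp}_{0k}=\frac{q_{0k}\tau_c\beta_{00k}}{q_{0k}\tau_c\beta_{00k}+\sum_{l'\in\Psi_D}\sum_iq_{l'i}\beta_{0l'i}+\sum_{l'\in\Phi_D}\sum_ip_{l'i}\beta_{0l'i}+\sigma^2}$. Then, as $M\to\infty$, $$R^{rp}_{0k}(M)\to R^{a\text{-}rp}_{0k}=\Big(1-\frac{\tau_p}{\tau_c}\Big)B_W\log_2\!\Big(1+\frac{p_{0k}\beta_{00k}}{\frac1{\tau_p}\sum_{l'\in\Psi_D}\sum_{i=1}^K\frac{p_{l'i}q_{l'i}}{q_{0k}}\frac{\beta_{0l'i}^2}{\beta_{00k}}}\Big),$$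 $$R^{sp}_{0k}(M)\to R^{a\text{-}sp}_{0k}=B_W\log_2\!\Big(1+\frac{p_{0k}\beta_{00k}}{\frac1{\tau_c}\sum_{l'\in\Psi_D}\sum_{i=1}^K\frac{(p_{l'i}+(1-\frac1{\tau_c})q_{l'i})q_{l'i}}{q_{0k}}\frac{\beta_{0l'i}^2}{\beta_{00k}}+\frac1{\tau_c}\sum_{l'\in\Phi_D}\sum_{i=1}^K\frac{(p_{l'i}+q_{l'i})p_{l'i}}{q_{0k}}\frac{\beta_{0l'i}^2}{\beta_{00k}}}\Big),$$ and $$R^{a\text{-}sp}_{0k}\le B_W\log_2\!\Big(1+\frac{p_{0k}\beta_{00k}}{\frac1{\tau_c}\sum_{l'\in\Psi_D}\sum_{i=1}^K\frac{p_{l'i}q_{l'i}}{q_{0k}}\frac{\beta_{0l'i}^2}{\beta_{00k}}+\frac1{\tau_c}\sum_{l'\in\Phi_D}\sum_{i=1}^K\frac{p_{l'i}^2}{q_{0k}}\frac{\beta_{0l'i}^2}{\beta_{00k}}}\Big),$$ the latter being $\lim_{M\to\infty}R^{sp\text{-}ub}_{0k}(M)$.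
   Context: $R^{rp}_{0k}$, $R^{sp}_{0k}$, $R^{sp\text{-}ub}_{0k}$ are the closed-form ergodic achievable rates of user $k$ in cell $0$ of a multicell massive MIMO uplink with $M$ BS antennas per cell and maximum ratio combining, using respectively regular pilots of length $\tau_p$, superimposed pilots over the whole coherence block of $\tau_c$ samples, and superimposed pilots with perfect pilot subtraction; $p_{l'i},q_{l'i}$ are data and pilot powers of user $i$ in cell $l'$ and $\beta_{0l'i}$ its large-scale fading to BS $0$. *)

(* Defs.v *)
From HB Require Import structures.
From mathcomp Require Import all_boot all_order all_algebra.
From mathcomp Require Import all_classical all_reals all_analysis.
Set Implicit Arguments. Unset Strict Implicit. Unset Printing Implicit Defensive.
Import Order.TTheory GRing.Theory Num.Theory numFieldNormedType.Exports.
Local Open Scope ring_scope.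

(* Cells (BS indices) are natural numbers; cell 0 is the reference cell.
   The cell set Phi_D is a (possibly infinite) predicate on nat containing 0.
   Users in each cell are indexed 0..K-1 (paper: 1..K).
   p l i, q l i : data / pilot power of user i in cell l;
   b l i        : beta_{0 l i}, large-scale fading from user i of cell l to BS 0. *)

Definition Psi (Phi : pred nat) : pred nat := fun l => (l != 0%N) && Phi l.

Section Rates.
Variable R : realType.

Definition cellseries (Phi : pred nat) (K : nat) (f : nat -> nat -> R) : R ^nat :=
  series (fun l => if Phi l then \sum_(i < K) f l i else 0).

Definition cellsum (Phi : pred nat) (K : nat) (f : nat -> nat -> R) : R :=
  limn (cellseries Phi K f).

Definition log2 (x : R) : R := ln x / ln 2.

Definition wsum (S : pred nat) (K : nat) (q b : nat -> nat -> R) (k : nat)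
  (w : nat -> nat -> R) : R :=
  cellsum S K (fun l i => w l i / q 0%N k * (b l i ^+ 2 / b 0%N k)).

Section Params.
Variables (Phi : pred nat) (K tc tp : nat) (p q b : nat -> nat -> R)
          (s2 BW : R) (k : nat).

Let p0 := p 0%N k.
Let q0 := q 0%N k.
Let b0 := b 0%N k.
Let Tc : R := tc%:R.
Let Tp : R := tp%:R.
Let W S w := wsum S K q b k w.

Definition gamma_rp : R :=
  q0 * Tp * b0 / (q0 * Tp * b0 + cellsum (Psi Phi) K (fun l i => q l i * b l i) + s2).

Definition gamma_sp : R :=
  q0 * Tc * b0 / (q0 * Tc * b0 + cellsum (Psi Phi) K (fun l i => q l i * b l i)
                  + cellsum Phi K (fun l i => p l i * b l i) + s2).

Definition R_rp (M : nat) : R :=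
  BW * (1 - Tp / Tc) * log2 (1 + M%:R * p0 * b0 /
     (M%:R / Tp * W (Psi Phi) (fun l i => p l i * q l i)
      + gamma_rp^-1 * (cellsum Phi K (fun l i => p l i * b l i) + s2))).

Definition I_sp (M : nat) : R :=
  M%:R / Tc * W (Psi Phi) (fun l i => (p l i + (1 - Tc^-1) * q l i) * q l i)
  + M%:R / Tc * W Phi (fun l i => (p l i + q l i) * p l i)
  + 2 / Tc * p0 * b0
  + 2 / Tc ^+ 2 * W (Psi Phi) (fun l i => q l i * p l i)
  + 1 / Tc ^+ 2 * W Phi (fun l i => p l i ^+ 2)
  + gamma_sp^-1 * (cellsum Phi K (fun l i => (q l i + p l i) * b l i) + s2).

Definition R_sp (M : nat) : R := BW * log2 (1 + M%:R * p0 * b0 / I_sp M).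

Definition I_spub (M : nat) : R :=
  M%:R / Tc * W (Psi Phi) (fun l i => p l i * q l i)
  + M%:R / Tc * W Phi (fun l i => p l i ^+ 2)
  + 1 / Tc ^+ 2 * W Phi (fun l i => p l i ^+ 2)
  + gamma_sp^-1 * (cellsum Phi K (fun l i => p l i * b l i) + s2).

Definition R_spub (M : nat) : R := BW * log2 (1 + M%:R * p0 * b0 / I_spub M).

Definition R_a_rp : R :=
  (1 - Tp / Tc) * BW * log2 (1 + p0 * b0 /
     (Tp^-1 * W (Psi Phi) (fun l i => p l i * q l i))).

Definition R_a_sp : R :=
  BW * log2 (1 + p0 * b0 /
     (Tc^-1 * W (Psi Phi) (fun l i => (p l i + (1 - Tc^-1) * q l i) * q l i)
      + Tc^-1 * W Phi (fun l i => (p l i + q l i) * p l i))).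

Definition R_a_spub : R :=
  BW * log2 (1 + p0 * b0 /
     (Tc^-1 * W (Psi Phi) (fun l i => p l i * q l i)
      + Tc^-1 * W Phi (fun l i => p l i ^+ 2))).

End Params.
End Rates.

(* Main.v *)
Require Import Defs.
From HB Require Import structures.
From mathcomp Require Import all_boot all_order all_algebra.
From mathcomp Require Import all_classical all_reals all_analysis.
From mathcomp Require Import lra ring.
Import Order.TTheory GRing.Theory Num.Theory numFieldNormedType.Exports.
Local Open Scope ring_scope.
Local Open Scope classical_set_scope.
Section H.
Variables (R : realType) (K : nat).

Lemma cs_ext (S : pred nat) (f g : nat -> nat -> R) :
  (forall l i, S l -> (i < K)%N -> f l i = g l i) ->
  cellseries S K f = cellseries S K g.
Proof.
move=> H; rewrite /cellseries; congr series; apply/funext => l.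
case SL: (S l) => //; apply: eq_bigr => i _; exact: H.
Qed.

Lemma cs_add (S : pred nat) (f g : nat -> nat -> R) :
  cellseries S K (fun l i => f l i + g l i) =
  (fun n => cellseries S K f n + cellseries S K g n).
Proof.
apply/funext => n; rewrite /cellseries /series /= -big_split /=.
apply: eq_bigr => l _; case: (S l); [exact: big_split | by rewrite addr0].
Qed.

Lemma cs_scale (S : pred nat) (c : R) (f : nat -> nat -> R) :
  cellseries S K (fun l i => c * f l i) = (fun n => c * cellseries S K f n).
Proof.
apply/funext => n; rewrite /cellseries /series /= big_distrr /=.
apply: eq_bigr => l _; case: (S l); [by rewrite big_distrr | by rewrite mulr0].
Qed.

Lemma cs_cvg_add (S : pred nat) (f g : nat -> nat -> R) :
  cvgn (cellseries S K f) -> cvgn (cellseries S K g) ->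
  cvgn (cellseries S K (fun l i => f l i + g l i)).
Proof.
move=> Hf Hg; rewrite cs_add.
apply/(cvgP (limn (cellseries S K f) + limn (cellseries S K g))).
exact: (cvgD Hf Hg).
Qed.

Lemma cs_cvg_scale (S : pred nat) c (f : nat -> nat -> R) :
  cvgn (cellseries S K f) -> cvgn (cellseries S K (fun l i => c * f l i)).
Proof.
move=> Hf; rewrite cs_scale.
apply/(cvgP (c * limn (cellseries S K f))).
exact: (cvgM (cvg_cst c) Hf).
Qed.

Lemma cs_Psi (Phi : pred nat) (f : nat -> nat -> R) : Phi 0%N -> forall n,
  cellseries (Psi Phi) K f n.+1 = cellseries Phi K f n.+1 - \sum_(i < K) f 0%N i.
Proof.
move=> H0 n; rewrite /cellseries /series /= !big_nat_recl // /Psi /= H0.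
by rewrite add0r addrC addKr.
Qed.

Lemma cs_cvg_Psi (Phi : pred nat) (f : nat -> nat -> R) : Phi 0%N ->
  cvgn (cellseries Phi K f) -> cvgn (cellseries (Psi Phi) K f).
Proof.
move=> H0 Hc.
apply/(cvgP (limn (cellseries Phi K f) - \sum_(i < K) f 0%N i)).
rewrite -cvg_shiftS.
have -> : (fun n => cellseries (Psi Phi) K f n.+1) =
   (fun n => cellseries Phi K f n.+1 - \sum_(i < K) f 0%N i).
  by apply/funext => n; rewrite cs_Psi.
apply: cvgB; last exact: cvg_cst.
by rewrite (cvg_shiftS (cellseries Phi K f)).
Qed.

Lemma cs_le (S : pred nat) (f g : nat -> nat -> R) :
  (forall l i, S l -> (i < K)%N -> f l i <= g l i) ->
  cvgn (cellseries S K f) -> cvgn (cellseries S K g) ->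
  cellsum S K f <= cellsum S K g.
Proof.
move=> H Hf Hg; apply: ler_lim => //; apply: nearW => n.
rewrite /cellseries /series /=; apply: ler_sum => l _.
case SL: (S l) => //; apply: ler_sum => i _; exact: H.
Qed.

Lemma cs_ge (S : pred nat) (f : nat -> nat -> R) :
  (forall l i, S l -> (i < K)%N -> 0 <= f l i) ->
  cvgn (cellseries S K f) -> forall n, cellseries S K f n <= cellsum S K f.
Proof.
move=> H Hf; apply: nondecreasing_cvgn_le => // n m nm.
rewrite /cellseries /series /= (big_cat_nat (leq0n n) nm) /= lerDl.
apply: sumr_ge0 => l _; case SL: (S l) => //; apply: sumr_ge0 => i _.
by rewrite H.
Qed.

Lemma cs_pos (S : pred nat) (f : nat -> nat -> R) :
  (0 < K)%N -> (exists l, S l) ->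
  (forall l i, S l -> (i < K)%N -> 0 < f l i) ->
  cvgn (cellseries S K f) -> 0 < cellsum S K f.
Proof.
move=> K0 [l0 Hl0] H Hf.
have Hge : cellseries S K f l0.+1 <= cellsum S K f.
  by apply: cs_ge => // l i a b; apply/ltW/H.
apply: (lt_le_trans _ Hge).
rewrite /cellseries /series /= big_nat_recr //= Hl0.
have h1 : 0 <= \sum_(0 <= k0 < l0) (if S k0 then \sum_(i < K) f k0 i else 0).
  apply: sumr_ge0 => l _; case SL: (S l) => //; apply: sumr_ge0 => i _.
  by apply/ltW/H.
have h2 : 0 < \sum_(i < K) f l0 i.
  case: K K0 H {Hf} => // K' _ H.
  rewrite big_ord_recl.
  have : 0 < f l0 (@ord0 K') by apply: H.
  have : 0 <= \sum_(i < K') f l0 (lift ord0 i).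
    by apply: sumr_ge0 => i _; apply/ltW/H.
  lra.
lra.
Qed.

End H.
Lemma key_ratio (R : realType) (A B c : R) : 0 < A ->
  (fun M : nat => M%:R * c / (M%:R * A + B)) @ \oo --> c / A.
Proof.
move=> A0; rewrite -cvg_shiftS.
have -> : (fun n : nat => n.+1%:R * c / (n.+1%:R * A + B)) =
          (fun n => c * (A + B * harmonic n)^-1).
  apply/funext => n; rewrite /harmonic /=.
  have n0 : n.+1%:R != 0 :> R by rewrite pnatr_eq0.
  have -> : n.+1%:R * A + B = n.+1%:R * (A + B * n.+1%:R^-1) by field.
  by rewrite invfM mulrA (mulrAC _ c) divff // mul1r.
apply: (@cvgM _ _ _ _ (fun=> c) (fun n => (A + B * harmonic n)^-1)); first exact: cvg_cst.
apply: (@cvgV _ _ _ _ (fun n => (A + B * harmonic n))); first by rewrite gt_eqF.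
rewrite -[X in _ --> X]addr0; apply: cvgD; first exact: cvg_cst.
rewrite -(mulr0 B); apply: cvgM; first exact: cvg_cst.
exact: cvg_harmonic.
Qed.

Lemma key_rate (R : realType) (A B c BW : R) : 0 < A -> 0 < c ->
  (fun M : nat => BW * log2 (1 + M%:R * c / (M%:R * A + B))) @ \oo -->
  BW * log2 (1 + c / A).
Proof.
move=> A0 c0; rewrite /log2.
apply: cvgM; first exact: cvg_cst.
apply: cvgM; last exact: cvg_cst.
have pos : 0 < 1 + c / A by rewrite addr_gt0 // divr_gt0.
apply: (continuous_cvg _ (continuous_ln pos)).
apply: cvgD; first exact: cvg_cst.
exact: key_ratio.
Qed.

Lemma key_rp (R : realType) (BW c1 c2 T W G : R) : 0 < T^-1 * W -> 0 < c1 * c2 ->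
  (fun M : nat => BW * log2 (1 + M%:R * c1 * c2 / (M%:R / T * W + G))) @ \oo -->
  BW * log2 (1 + c1 * c2 / (T^-1 * W)).
Proof.
move=> A0 c0.
have -> : (fun M : nat => BW * log2 (1 + M%:R * c1 * c2 / (M%:R / T * W + G))) =
  (fun M : nat => BW * log2 (1 + M%:R * (c1 * c2) / (M%:R * (T^-1 * W) + G))).
  by apply/funext => M; rewrite !mulrA.
exact: key_rate.
Qed.

Lemma key_sp (R : realType) (BW c1 c2 T W1 W2 X3 X4 X5 X6 : R) :
  0 < T^-1 * W1 + T^-1 * W2 -> 0 < c1 * c2 ->
  (fun M : nat => BW * log2 (1 + M%:R * c1 * c2 /
     (M%:R / T * W1 + M%:R / T * W2 + X3 + X4 + X5 + X6))) @ \oo -->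
  BW * log2 (1 + c1 * c2 / (T^-1 * W1 + T^-1 * W2)).
Proof.
move=> A0 c0.
have -> : (fun M : nat => BW * log2 (1 + M%:R * c1 * c2 /
     (M%:R / T * W1 + M%:R / T * W2 + X3 + X4 + X5 + X6))) =
  (fun M : nat => BW * log2 (1 + M%:R * (c1 * c2) /
     (M%:R * (T^-1 * W1 + T^-1 * W2) + (X3 + X4 + X5 + X6)))).
  by apply/funext => M; congr (_ * log2 (1 + _ / _)); ring.
exact: key_rate.
Qed.

Lemma key_spub (R : realType) (BW c1 c2 T W1 W2 X3 X4 : R) :
  0 < T^-1 * W1 + T^-1 * W2 -> 0 < c1 * c2 ->
  (fun M : nat => BW * log2 (1 + M%:R * c1 * c2 /
     (M%:R / T * W1 + M%:R / T * W2 + X3 + X4))) @ \oo -->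
  BW * log2 (1 + c1 * c2 / (T^-1 * W1 + T^-1 * W2)).
Proof.
move=> A0 c0.
have -> : (fun M : nat => BW * log2 (1 + M%:R * c1 * c2 /
     (M%:R / T * W1 + M%:R / T * W2 + X3 + X4))) =
  (fun M : nat => BW * log2 (1 + M%:R * (c1 * c2) /
     (M%:R * (T^-1 * W1 + T^-1 * W2) + (X3 + X4)))).
  by apply/funext => M; congr (_ * log2 (1 + _ / _)); ring.
exact: key_rate.
Qed.

Theorem corollary2 (R : realType) (Phi : pred nat) (K tc tp : nat)
  (p q b : nat -> nat -> R) (s2 BW : R) (k : nat) :
  Phi 0%N ->
  (exists l, Psi Phi l) ->
  (1 <= K)%N -> (K <= tp)%N -> (tp <= tc)%N -> (k < K)%N ->
  (forall l i, Phi l -> (i < K)%N -> 0 < p l i /\ 0 < q l i /\ 0 < b l i) ->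
  0 < s2 -> 0 < BW ->
  cvgn (cellseries Phi K (fun l i => p l i * b l i)) ->
  cvgn (cellseries Phi K (fun l i => q l i * b l i)) ->
  cvgn (cellseries Phi K (fun l i => p l i * q l i * b l i ^+ 2)) ->
  cvgn (cellseries Phi K (fun l i => p l i ^+ 2 * b l i ^+ 2)) ->
  cvgn (cellseries Phi K (fun l i => q l i ^+ 2 * b l i ^+ 2)) ->
  [/\ R_rp Phi K tc tp p q b s2 BW k @ \oo --> R_a_rp Phi K tc tp p q b BW k,
      R_sp Phi K tc p q b s2 BW k @ \oo --> R_a_sp Phi K tc p q b BW k,
      R_a_sp Phi K tc p q b BW k <= R_a_spub Phi K tc p q b BW k
    & R_spub Phi K tc p q b s2 BW k @ \oo --> R_a_spub Phi K tc p q b BW k].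
Proof.
move=> H0 [l1 Hl1] K1 Ktp tptc kK pos s20 BW0 Cpb Cqb Cpq Cpp Cqq.
have [p0 [q0 b0]] := pos 0%N k H0 kK.
have nq0 : q 0%N k != 0 by rewrite gt_eqF.
have nb0 : b 0%N k != 0 by rewrite gt_eqF.
have Tp0 : 0 < tp%:R :> R by rewrite ltr0n; apply: leq_trans Ktp.
have Tc0 : 0 < tc%:R :> R by rewrite ltr0n; apply: leq_trans tptc; apply: leq_trans Ktp.
have Tc1 : 0 <= 1 - (tc%:R : R)^-1.
  by rewrite subr_ge0 invf_le1 // ler1n; apply: leq_trans tptc; apply: leq_trans Ktp.
have PsiPhi : forall l, Psi Phi l -> Phi l by move=> l /andP[].
set c := (q 0%N k * b 0%N k)^-1.
have c0 : 0 < c by rewrite invr_gt0 mulr_gt0.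
have pos' : forall (w : nat -> nat -> R) l i, Phi l -> (i < K)%N -> 0 < w l i ->
    0 < w l i / q 0%N k * (b l i ^+ 2 / b 0%N k).
  move=> w l i Hl Hi Hw; have [_ [_ bl]] := pos l i Hl Hi.
  by rewrite mulr_gt0 ?divr_gt0 // exprn_gt0.
have C1 : cvgn (cellseries (Psi Phi) K
   (fun l i => p l i * q l i / q 0%N k * (b l i ^+ 2 / b 0%N k))).
  rewrite (@cs_ext R K _ _ (fun l i => c * (p l i * q l i * b l i ^+ 2))).
    by apply: cs_cvg_scale; apply: cs_cvg_Psi.
  by move=> l i _ _; rewrite /c; field; rewrite nq0 nb0.
have C2 : cvgn (cellseries (Psi Phi) K
   (fun l i => (p l i + (1 - (tc%:R)^-1) * q l i) * q l i / q 0%N k * (b l i ^+ 2 / b 0%N k))).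
  rewrite (@cs_ext R K _ _ (fun l i => c * (p l i * q l i * b l i ^+ 2)
      + (c * (1 - (tc%:R)^-1)) * (q l i ^+ 2 * b l i ^+ 2))).
    by apply: cs_cvg_add; apply: cs_cvg_scale; apply: cs_cvg_Psi.
  by move=> l i _ _; rewrite /c; field; rewrite nq0 nb0 gt_eqF.
have C3 : cvgn (cellseries Phi K
   (fun l i => (p l i + q l i) * p l i / q 0%N k * (b l i ^+ 2 / b 0%N k))).
  rewrite (@cs_ext R K _ _ (fun l i => c * (p l i ^+ 2 * b l i ^+ 2)
      + c * (p l i * q l i * b l i ^+ 2))).
    by apply: cs_cvg_add; apply: cs_cvg_scale.
  by move=> l i _ _; rewrite /c; field; rewrite nq0 nb0.
have C4 : cvgn (cellseries Phi K
   (fun l i => p l i ^+ 2 / q 0%N k * (b l i ^+ 2 / b 0%N k))).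
  rewrite (@cs_ext R K _ _ (fun l i => c * (p l i ^+ 2 * b l i ^+ 2))).
    by apply: cs_cvg_scale.
  by move=> l i _ _; rewrite /c; field; rewrite nq0 nb0.
have P1 : 0 < wsum (Psi Phi) K q b k (fun l i => p l i * q l i).
  apply: cs_pos => //; first by exists l1.
  move=> l i /PsiPhi Hl Hi; apply: (pos' (fun l i => p l i * q l i)) => //.
  by have [? [? _]] := pos l i Hl Hi; rewrite mulr_gt0.
have P2 : 0 < wsum (Psi Phi) K q b k
    (fun l i => (p l i + (1 - (tc%:R)^-1) * q l i) * q l i).
  apply: cs_pos => //; first by exists l1.
  move=> l i /PsiPhi Hl Hi; apply: (pos' (fun l i => (p l i + (1 - (tc%:R)^-1) * q l i) * q l i)) => //.
  have [? [? _]] := pos l i Hl Hi.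
  by rewrite mulr_gt0 // ltr_wpDr // mulr_ge0 // ltW.
have P3 : 0 < wsum Phi K q b k (fun l i => (p l i + q l i) * p l i).
  apply: cs_pos => //; first by exists 0%N.
  move=> l i Hl Hi; apply: (pos' (fun l i => (p l i + q l i) * p l i)) => //.
  by have [? [? _]] := pos l i Hl Hi; rewrite mulr_gt0 // addr_gt0.
have P4 : 0 < wsum Phi K q b k (fun l i => p l i ^+ 2).
  apply: cs_pos => //; first by exists 0%N.
  move=> l i Hl Hi; apply: (pos' (fun l i => p l i ^+ 2)) => //.
  by have [? [? _]] := pos l i Hl Hi; rewrite exprn_gt0.
have pb0 : 0 < p 0%N k * b 0%N k by rewrite mulr_gt0.
split.
- rewrite /R_a_rp (mulrC _ BW); apply: key_rp => //.
  by rewrite mulr_gt0 // invr_gt0.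
- apply: key_sp => //.
  by rewrite addr_gt0 // mulr_gt0 // invr_gt0.
- rewrite /R_a_sp /R_a_spub; apply: ler_wpM2l; first exact: ltW.
  rewrite /log2; apply: ler_wpM2r.
    by rewrite invr_ge0 ltW // ln_gt0 // ltr1n.
  have D2 : 0 < (tc%:R)^-1 * wsum (Psi Phi) K q b k (fun l i => p l i * q l i)
      + (tc%:R)^-1 * wsum Phi K q b k (fun l i => p l i ^+ 2).
    by rewrite addr_gt0 // mulr_gt0 // invr_gt0.
  have D1 : 0 < (tc%:R)^-1 * wsum (Psi Phi) K q b k
      (fun l i => (p l i + (1 - (tc%:R)^-1) * q l i) * q l i)
      + (tc%:R)^-1 * wsum Phi K q b k (fun l i => (p l i + q l i) * p l i).
    by rewrite addr_gt0 // mulr_gt0 // invr_gt0.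
  rewrite ler_ln ?posrE ?addr_gt0 ?divr_gt0 // lerD2l.
  apply: ler_wpM2l; first exact: ltW.
  rewrite lef_pV2 ?posrE //.
  apply: lerD; (apply: ler_wpM2l; first by rewrite invr_ge0 ltW).
  + apply: cs_le => // l i /PsiPhi Hl Hi.
    have [pl [ql bl]] := pos l i Hl Hi.
    apply: ler_wpM2r; first by rewrite divr_ge0 ?exprn_ge0 ?ltW.
    apply: ler_wpM2r; first by rewrite invr_ge0 ltW.
    apply: ler_wpM2r; first exact: ltW.
    by rewrite lerDl mulr_ge0 // ltW.
  + apply: cs_le => // l i Hl Hi.
    have [pl [ql bl]] := pos l i Hl Hi.
    apply: ler_wpM2r; first by rewrite divr_ge0 ?exprn_ge0 ?ltW.
    apply: ler_wpM2r; first by rewrite invr_ge0 ltW.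
    by rewrite expr2 ler_wpM2r ?lerDl // ltW.
- apply: key_spub => //.
  by rewrite addr_gt0 // mulr_gt0 // invr_gt0.
Qed.
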